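(* Let $\varphi(x)$, $x\in\mathbb{C}^n$, be given in disjunctive normal form $$\varphi(x)=\bigvee_{i=1}^{d}\Big(\bigwedge_{j=1}^{e_i} t_{ij}(x)=0\;\wedge\;\bigwedge_{k=1}^{f_i} u_{ik}(x)\neq 0\Big),$$ with $t_{ij},u_{ik}\in\mathbb{C}[x_1,\dots,x_n]$, having $d$ disjuncts and a total of $e=\sum_i e_i$ equations. Then there is a polynomial $p(a,b,x)\in\mathbb{C}[a,b,x]$ of degree at most $d$ in $a$ and at most $e$ in $b$ such that for all $x\in\mathbb{C}^n$, $$\varphi(x)\iff(\exists a\in\mathbb{C})(\forall b\in\mathbb{C})\;p(a,b,x)=0.$$ Explicitly, one may take $p(a,b,x)=\prod_{i=1}^d\Big[\big(1-a\prod_{k=1}^{f_i}u_{ik}(x)\big)+\sum_{j=1}^{e_i}t_{ij}(x)\,b^j\Big]$.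
   Context: Empty products are $1$ and empty sums are $0$; $a,b$ are single scalar variables. *)

(* Defs.v *)
From HB Require Import structures.
From mathcomp Require Import all_boot all_order all_algebra.
From mathcomp Require Import Rstruct complex.
From mathcomp Require Import mpoly.
Set Implicit Arguments. Unset Strict Implicit. Unset Printing Implicit Defensive.
Import Order.TTheory GRing.Theory Num.Theory.
Local Open Scope ring_scope.

Definition C : Type := complex Rdefinitions.R.
Definition C_closedField : closedFieldType := C.

Definition mdegin (K : nzRingType) (m : nat) (p : {mpoly K[m]}) (i : 'I_m) : nat :=
  \max_(mm <- msupp p) mm i.

(* The evaluation point (a, b, x) in C^(2+n): coordinate 0 is a,
   coordinate 1 is b, coordinates 2..n+1 are x_1..x_n. *)
Definition pt_abx (n : nat) (a b : C) (x : 'I_n -> C) : 'I_(2 + n) -> C :=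
  fun i => match split i with
           | inl k => if k == ord0 then a else b
           | inr j => x j
           end.

Definition idx_a (n : nat) : 'I_(2 + n) := lshift n (ord0 : 'I_2).
Definition idx_b (n : nat) : 'I_(2 + n) := lshift n (ord_max : 'I_2).

(* Main.v *)
Require Import Defs.
From HB Require Import structures.
From mathcomp Require Import all_boot all_order all_algebra.
From mathcomp Require Import Rstruct complex.
From mathcomp Require Import mpoly.
Set Implicit Arguments. Unset Strict Implicit. Unset Printing Implicit Defensive.
Import Order.TTheory GRing.Theory Num.Theory.
Local Open Scope ring_scope.

Section Dg.
Variables (R : comNzRingType) (m : nat) (i : 'I_m).
Definition Dg (k : nat) (q : {mpoly R[m]}) :=
  forall mm, mm \in msupp q -> (mm i <= k)%N.

Lemma Dg_le k k' q : (k <= k')%N -> Dg k q -> Dg k' q.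
Proof. by move=> le h mm /h /leq_trans; apply. Qed.

Lemma Dg_add k p q : Dg k p -> Dg k q -> Dg k (p + q).
Proof. by move=> hp hq mm /msuppD_le; rewrite mem_cat => /orP[/hp|/hq]. Qed.

Lemma Dg_sub k p q : Dg k p -> Dg k q -> Dg k (p - q).
Proof. by move=> hp hq mm /msuppB_le; rewrite mem_cat => /orP[/hp|/hq]. Qed.

Lemma Dg_mul k l p q : Dg k p -> Dg l q -> Dg (k + l) (p * q).
Proof.
move=> hp hq mm /msuppM_le /allpairsP [[m1 m2] /= [h1 h2 ->]].
by rewrite mnmDE leq_add // ?hp ?hq.
Qed.

Lemma Dg_scale k c p : Dg k p -> Dg k (c *: p).
Proof. by move=> hp mm /msuppZ_le /hp. Qed.

Lemma Dg1 : Dg 0 1.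
Proof. by move=> mm; rewrite msupp1 inE => /eqP ->; rewrite mnm0E. Qed.

Lemma DgC c : Dg 0 c%:MP.
Proof. by move=> mm; rewrite msuppC; case: (c == 0) => //; rewrite inE => /eqP ->; rewrite mnm0E. Qed.

Lemma DgX j : Dg (i == j) 'X_j.
Proof. by move=> mm; rewrite msuppX inE => /eqP ->; rewrite mnm1E eq_sym. Qed.

Lemma Dg_sum (T : eqType) (r : seq T) (P : pred T) F k :
  (forall t, Dg k (F t)) -> Dg k (\sum_(t <- r | P t) F t).
Proof.
move=> h mm /msupp_sum_le /flattenP [s /mapP [t _ ->]]; exact: h.
Qed.

Lemma Dg_prod (T : Type) (r : seq T) (P : pred T) F K :
  (forall t, Dg (K t) (F t)) -> Dg (\sum_(t <- r | P t) K t) (\prod_(t <- r | P t) F t).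
Proof.
move=> h; apply: (big_ind2 (fun q k => Dg k q)) => //.
- exact: Dg1.
- by move=> ? ? ? ? ??; apply: Dg_mul.
Qed.

Lemma Dg_exp k q l : Dg k q -> Dg (k * l) (q ^+ l).
Proof.
move=> h; elim: l => [|l ih]; first by rewrite muln0 expr0; apply: Dg1.
by rewrite exprS mulnS; apply: Dg_mul.
Qed.

Lemma Dg_mdegin k q : Dg k q -> (mdegin q i <= k)%N.
Proof. by move=> h; apply/bigmax_leqP_seq => mm /h. Qed.
End Dg.

Definition liftp (n : nat) (q : {mpoly C[n]}) : {mpoly C[2 + n]} :=
  q \mPo [tuple 'X_(rshift 2 j) | j < n].

Lemma Dg_liftp n (i : 'I_(2 + n)) q : (i < 2)%N -> Dg i 0 (liftp q).
Proof.
move=> hi; rewrite /liftp comp_mpolyE; apply: Dg_sum => mm; apply: Dg_scale.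
apply: (@Dg_le _ _ _ (\sum_(j < n) 0%N)); first by rewrite big1.
apply: Dg_prod => j; rewrite tnth_mktuple; apply: (@Dg_le _ _ _ (0 * mm j)%N) => //; apply: Dg_exp.
have /negbTE E : i != rshift 2 j.
  by apply/eqP => E; move: hi; rewrite E /= ltnNge leq_addr.
apply: (@Dg_le _ _ i (i == rshift 2 j)); first by rewrite E.
exact: DgX.
Qed.

Lemma pt_a n a b x : pt_abx (n:=n) a b x (idx_a n) = a.
Proof. by rewrite /pt_abx /idx_a (unsplitK (inl _ _)). Qed.
Lemma pt_b n a b x : pt_abx (n:=n) a b x (idx_b n) = b.
Proof. by rewrite /pt_abx /idx_b (unsplitK (inl _ _)). Qed.
Lemma pt_x n a b x j : pt_abx (n:=n) a b x (rshift 2 j) = x j.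
Proof. by rewrite /pt_abx (unsplitK (inr _ _)). Qed.

Lemma meval_liftp n (q : {mpoly C[n]}) a b x : (liftp q).@[pt_abx a b x] = q.@[x].
Proof.
rewrite /liftp comp_mpoly_meval; apply: meval_eq => j.
by rewrite tnth_mktuple mevalXU pt_x.
Qed.
Section Main.
Variables (n d : nat) (e_ f_ : 'I_d -> nat)
    (t : forall i : 'I_d, 'I_(e_ i) -> {mpoly C[n]})
    (u : forall i : 'I_d, 'I_(f_ i) -> {mpoly C[n]}).

Definition fac (i : 'I_d) : {mpoly C[2 + n]} :=
  1 - 'X_(idx_a n) * liftp (\prod_(k < f_ i) @u i k)
  + \sum_(j < e_ i) liftp (@t i j) * 'X_(idx_b n) ^+ j.+1.

Lemma ia_ib : (idx_a n == idx_b n) = false.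
Proof. by rewrite /idx_a /idx_b eq_lshift. Qed.

Lemma fac_a i : Dg (idx_a n) 1 (fac i).
Proof.
apply: Dg_add; [apply: Dg_sub|apply: Dg_sum => j].
- exact: (Dg_le _ (Dg1 _)).
- apply: (@Dg_le _ _ _ ((idx_a n == idx_a n) + 0)%N); first by rewrite eqxx.
  apply: Dg_mul; first exact: DgX. by apply: Dg_liftp.
- apply: (@Dg_le _ _ _ (0 + (idx_a n == idx_b n) * j.+1)%N); first by rewrite ia_ib.
  apply: Dg_mul; first by apply: Dg_liftp. apply: Dg_exp; exact: DgX.
Qed.

Lemma fac_b i : Dg (idx_b n) (e_ i) (fac i).
Proof.
apply: Dg_add; [apply: Dg_sub|apply: Dg_sum => j].
- exact: (Dg_le _ (Dg1 _)).
- apply: (@Dg_le _ _ _ ((idx_b n == idx_a n) + 0)%N); first by rewrite eq_sym ia_ib.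
  apply: Dg_mul; first exact: DgX. by apply: Dg_liftp.
- apply: (@Dg_le _ _ _ (0 + (idx_b n == idx_b n) * j.+1)%N); first by rewrite eqxx add0n mul1n.
  apply: Dg_mul; first by apply: Dg_liftp. apply: Dg_exp; exact: DgX.
Qed.

Lemma fac_eval i a b x : (fac i).@[pt_abx a b x] =
  1 - a * \prod_(k < f_ i) (@u i k).@[x] + \sum_(j < e_ i) (@t i j).@[x] * b ^+ j.+1.
Proof.
rewrite /fac rmorphD rmorphB rmorph1 rmorphM /= mevalXU pt_a meval_liftp rmorph_prod.
rewrite rmorph_sum; congr (_ + _); apply: eq_bigr => j _.
by rewrite rmorphM rmorphXn /= mevalXU pt_b meval_liftp.
Qed.
End Main.

Unset Implicit Arguments. Set Strict Implicit.

Lemma nat_roots_poly (q : {poly C}) : (forall b : C, q.[b] = 0) -> q = 0.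
Proof.
move=> h; apply: (@roots_geq_poly_eq0 _ q [seq k%:R | k <- iota 0 (size q)]).
- by apply/allP => z /mapP [k _ ->]; apply/rootP.
- rewrite map_inj_uniq ?iota_uniq // => k l /eqP; rewrite eqr_nat => /eqP.
  done.
- by rewrite size_map size_iota.
Qed.

Theorem theorem4p1 (n d : nat) (e_ f_ : 'I_d -> nat)
    (t : forall i : 'I_d, 'I_(e_ i) -> {mpoly C[n]})
    (u : forall i : 'I_d, 'I_(f_ i) -> {mpoly C[n]}) :
  exists p : {mpoly C[2 + n]},
    (mdegin p (idx_a n) <= d)%N /\
    (mdegin p (idx_b n) <= \sum_(i < d) e_ i)%N /\
    forall x : 'I_n -> C,
      (exists i : 'I_d,
          (forall j : 'I_(e_ i), (t i j).@[x] = 0) /\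
          (forall k : 'I_(f_ i), (u i k).@[x] != 0))
      <-> (exists a : C, forall b : C, p.@[pt_abx a b x] = 0).
Proof.
exists (\prod_(i < d) @fac n d e_ f_ t u i); split; [|split].
- apply: Dg_mdegin; apply: (@Dg_le _ _ _ (\sum_(i < d) 1)%N).
    by rewrite sum_nat_const card_ord muln1.
  by apply: Dg_prod => i; apply: fac_a.
- by apply: Dg_mdegin; apply: Dg_prod => i; apply: fac_b.
move=> x; split.
- move=> [i [ht hu]]; set U := \prod_(k < f_ i) (u i k).@[x].
  have U0 : U != 0 by apply/prodf_neq0 => k _; apply: hu.
  exists U^-1 => b; rewrite rmorph_prod /= (bigD1 i) //= fac_eval.
  rewrite -/U mulVf // subrr add0r big1 ?mul0r // => j _.
  by rewrite ht mul0r.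
- move=> [a ha].
  pose q (i : 'I_d) : {poly C} := (1 - a * \prod_(k < f_ i) (u i k).@[x])%:P
     + \sum_(j < e_ i) (t i j).@[x] *: 'X^(j.+1).
  have Q0 : \prod_(i < d) q i = 0.
    apply: nat_roots_poly => b; rewrite horner_prod -(ha b) rmorph_prod /=.
    apply: eq_bigr => i _; rewrite fac_eval hornerD hornerC horner_sum.
    congr (_ + _); apply: eq_bigr => j _.
    by rewrite hornerZ hornerXn.
  move/eqP/prodf_eq0: Q0 => [i _ /eqP qi0]; exists i.
  have c0 : 1 - a * \prod_(k < f_ i) (u i k).@[x] = 0.
    move: (congr1 (fun p : {poly C} => p`_0) qi0).
    rewrite coef0 coefD coefC /= coef_sum.
    rewrite [X in _ + X = _ -> _](_ : _ = 0) ?addr0 //.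
    by apply: big1 => j _; rewrite coefZ coefXn /= mulr0.
  split.
  + move=> j0; move: (congr1 (fun p : {poly C} => p`_(j0.+1)) qi0).
    rewrite coef0 coefD coefC /= add0r coef_sum (bigD1 j0) //= [X in _ + X]big1.
      by rewrite coefZ coefXn eqxx mulr1 addr0.
    move=> j neq; rewrite coefZ coefXn eqSS.
    have -> : (j0 == j :> nat) = false by apply/negbTE; rewrite eq_sym.
    by rewrite mulr0.
  + have P : \prod_(k < f_ i) (u i k).@[x] != 0.
      apply/eqP => P0; move: c0; rewrite P0 mulr0 subr0 => /eqP; by rewrite oner_eq0.
    move=> k; apply: contraNneq P => uk; apply/prodf_eq0; exists k => //.
    by rewrite uk.
Qed.
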